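(* Let $L$ be a frame. The map $\nu(F)=\bigcap_{a\in F}\mathfrak o(a)$ restricts to an order isomorphism from $(\mathsf{Ex}(L),\sqsubseteq)$ onto $(\{\mathrm{fit}(S)\mid S\in\mathcal S_b(L)\},\subseteq)$, with inverse $S\mapsto\{a\in L\mid S\subseteq\mathfrak o(a)\}$.
   Context: A frame is a complete lattice $L$ with $(\bigvee A)\wedge b=\bigvee_{a\in A}(a\wedge b)$, Heyting implication $\to$. A sublocale is a subset $S\subseteq L$ closed under all meets with $a\to s\in S$ for $a\in L,s\in S$; the sublocales form a coframe $\mathsf{Sl}(L)$ under inclusion, with meets intersections and joins $\bigvee_i S_i=\{\bigwedge A\mid A\subseteq\bigcup_i S_i\}$. $\mathfrak o(a)=\{a\to b\mid b\in L\}$ (open sublocale), $\mathfrak c(a)={\uparrow}a$ (closed sublocale). $\mathrm{fit}(S)=\bigcap\{\mathfrak o(a)\mid S\subseteq\mathfrak o(a)\}$. A smooth sublocale is a join in $\mathsf{Sl}(L)$ of sublocales of the form $\mathfrak c(x)\cap\mathfrak o(y)$; $\mathcal S_b(L)$ is the set of smooth sublocales. Filters are nonempty up-closed subsets closed under finite meets, ordered by reverse inclusion $\sqsubseteq$. $\mathsf{Ex}(L)$ is the set of filters containing every exact meet of their subsets, where $\bigwedge M$ is exact if $(\bigwedge M)\vee b=\bigwedge_{a\in M}(a\vee b)$ for all $b$. *)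

(* Defs.v *)
Record frame := Frame {
  carrier :> Type;
  le : carrier -> carrier -> Prop;
  le_refl : forall a, le a a;
  le_trans : forall a b c, le a b -> le b c -> le a c;
  le_antisym : forall a b, le a b -> le b a -> a = b;
  sup : (carrier -> Prop) -> carrier;
  sup_ub : forall (A : carrier -> Prop) a, A a -> le a (sup A);
  sup_least : forall (A : carrier -> Prop) b,
      (forall a, A a -> le a b) -> le (sup A) b;
  meet : carrier -> carrier -> carrier;
  meet_lb1 : forall a b, le (meet a b) a;
  meet_lb2 : forall a b, le (meet a b) b;
  meet_glb : forall a b c, le c a -> le c b -> le c (meet a b);
  frame_distr : forall (A : carrier -> Prop) b,
      meet (sup A) b = sup (fun c => exists a, A a /\ c = meet a b)
}.

Arguments le {L} : rename.
Arguments sup {L} : rename.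
Arguments meet {L} : rename.

Section FrameDefs.
Variable L : frame.

Definition subset (A B : L -> Prop) : Prop := forall x, A x -> B x.
Definition seteq (A B : L -> Prop) : Prop := forall x, A x <-> B x.

Definition inf (A : L -> Prop) : L := sup (fun c => forall a, A a -> le c a).
Definition join (a b : L) : L := sup (fun c => c = a \/ c = b).
Definition imp (a b : L) : L := sup (fun c => le (meet c a) b).

Definition sublocale (S : L -> Prop) : Prop :=
  (forall A : L -> Prop, subset A S -> S (inf A)) /\
  (forall a s, S s -> S (imp a s)).

Definition sl_join {I : Type} (Si : I -> L -> Prop) : L -> Prop :=
  fun x => exists A : L -> Prop,
    subset A (fun y => exists i, Si i y) /\ x = inf A.

Definition opn (a : L) : L -> Prop := fun x => exists b, x = imp a b.
Definition cld (a : L) : L -> Prop := fun x => le a x.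

Definition fit (S : L -> Prop) : L -> Prop :=
  fun x => forall a, subset S (opn a) -> opn a x.

Definition smooth (S : L -> Prop) : Prop :=
  exists (I : Type) (xs ys : I -> L),
    seteq S (sl_join (fun i => fun z => cld (xs i) z /\ opn (ys i) z)).

Definition filter (F : L -> Prop) : Prop :=
  (exists a, F a) /\
  (forall a b, F a -> le a b -> F b) /\
  (forall a b, F a -> F b -> F (meet a b)).

Definition filter_le (F G : L -> Prop) : Prop := subset G F.

Definition exact_meet (M : L -> Prop) : Prop :=
  forall b, join (inf M) b = inf (fun c => exists a, M a /\ c = join a b).

Definition exact_filter (F : L -> Prop) : Prop :=
  filter F /\ forall M : L -> Prop, subset M F -> exact_meet M -> F (inf M).

Definition nu (F : L -> Prop) : L -> Prop :=
  fun x => forall a, F a -> opn a x.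

Definition nu_inv (S : L -> Prop) : L -> Prop :=
  fun a => subset S (opn a).

End FrameDefs.

(* Main.v *)
Require Import Defs.

Section Aux.
Variable L : frame.

Notation "a <== b" := (@le L a b) (at level 70).

Lemma lt_ (a b c : L) : a <== b -> b <== c -> a <== c.
Proof. apply le_trans. Qed.

Lemma anti (a b : L) : a <== b -> b <== a -> a = b.
Proof. apply le_antisym. Qed.

Definition top : L := sup (fun _ => True).
Lemma le_top (a : L) : a <== top.
Proof. apply sup_ub. exact I. Qed.

Lemma meet_comm_le (a b : L) : meet a b <== meet b a.
Proof. apply meet_glb; [apply meet_lb2|apply meet_lb1]. Qed.

Lemma meet_mono (a a' b b' : L) : a <== a' -> b <== b' -> meet a b <== meet a' b'.
Proof.
  intros H1 H2; apply meet_glb.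
  - eapply lt_. apply meet_lb1. exact H1.
  - eapply lt_. apply meet_lb2. exact H2.
Qed.

Lemma inf_lb (A : L -> Prop) a : A a -> inf L A <== a.
Proof. intros Ha. apply sup_least. intros c Hc. apply Hc, Ha. Qed.

Lemma inf_glb (A : L -> Prop) c : (forall a, A a -> c <== a) -> c <== inf L A.
Proof. intros H. apply sup_ub. exact H. Qed.

Lemma join_ub1 (a b : L) : a <== join L a b.
Proof. apply sup_ub. left; reflexivity. Qed.
Lemma join_ub2 (a b : L) : b <== join L a b.
Proof. apply sup_ub. right; reflexivity. Qed.
Lemma join_least (a b c : L) : a <== c -> b <== c -> join L a b <== c.
Proof. intros. apply sup_least. intros d [->| ->]; assumption. Qed.

Lemma imp_adj (a b c : L) : c <== imp L a b <-> meet c a <== b.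
Proof.
  split.
  - intros H. eapply lt_. apply meet_mono. exact H. apply le_refl.
    unfold imp. rewrite frame_distr. apply sup_least.
    intros d [e [He ->]]. exact He.
  - intros H. apply sup_ub. exact H.
Qed.

Lemma split_join (u p q r : L) :
  meet u p <== r -> meet u q <== r -> meet u (join L p q) <== r.
Proof.
  intros H1 H2. eapply lt_. apply meet_comm_le.
  unfold join. rewrite frame_distr. apply sup_least.
  intros d [e [[-> | ->] ->]]; eapply lt_; try apply meet_comm_le; assumption.
Qed.

Definition Sm {I : Type} (xs ys : I -> L) : L -> Prop :=
  sl_join L (fun i => fun z => cld L (xs i) z /\ opn L (ys i) z).

Lemma char {I : Type} (xs ys : I -> L) (S : L -> Prop) :
  seteq L S (Sm xs ys) ->
  forall a, nu_inv L S a <-> forall i, ys i <== join L a (xs i).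
Proof.
  intros HS a. split.
  - intros Hn i.
    set (s := imp L (ys i) (join L a (xs i))).
    assert (Ss : S s).
    { apply HS. exists (fun z => z = s). split.
      - intros y ->. exists i. split.
        + unfold cld. apply imp_adj. eapply lt_. apply meet_lb1. apply join_ub2.
        + exists (join L a (xs i)). reflexivity.
      - apply anti.
        + apply inf_glb. intros w ->. apply le_refl.
        + apply inf_lb. reflexivity. }
    destruct (Hn s Ss) as [t Ht].
    assert (Has : a <== s).
    { apply imp_adj. eapply lt_. apply meet_lb1. apply join_ub1. }
    assert (Hat : a <== t).
    { rewrite Ht in Has. apply imp_adj in Has.
      eapply lt_; [|exact Has]. apply meet_glb; apply le_refl. }
    assert (Hts : top <== s).
    { rewrite Ht. apply imp_adj. eapply lt_. apply meet_lb2. exact Hat. }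
    apply imp_adj in Hts. eapply lt_; [|exact Hts].
    apply meet_glb. apply le_top. apply le_refl.
  - intros Hi z Sz. apply HS in Sz. destruct Sz as [A [HA ->]].
    exists (inf L A). apply anti.
    + apply imp_adj. apply meet_lb1.
    + apply inf_glb. intros w Aw.
      destruct (HA w Aw) as [i [Hc [bb Hb]]]. unfold cld in Hc.
      set (t := imp L a (inf L A)).
      assert (Hta : meet t a <== w).
      { assert (H0 : meet t a <== inf L A) by (apply imp_adj; apply le_refl).
        eapply lt_. exact H0. apply inf_lb. exact Aw. }
      assert (Hw : meet w (ys i) <== bb).
      { apply imp_adj. rewrite <- Hb. apply le_refl. }
      rewrite Hb. apply imp_adj.
      apply (lt_ _ (meet (meet t (ys i)) (join L a (xs i)))).
      { apply meet_glb. apply le_refl. eapply lt_. apply meet_lb2. apply Hi. }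
      apply split_join.
      * eapply lt_; [|exact Hw]. apply meet_glb.
        -- eapply lt_; [|exact Hta]. apply meet_glb.
           eapply lt_. apply meet_lb1. apply meet_lb1. apply meet_lb2.
        -- eapply lt_. apply meet_lb1. apply meet_lb2.
      * eapply lt_; [|exact Hw]. apply meet_glb.
        -- eapply lt_. apply meet_lb2. exact Hc.
        -- eapply lt_. apply meet_lb1. apply meet_lb2.
Qed.

Lemma fitinv (S : L -> Prop) a : nu_inv L (fit L S) a <-> nu_inv L S a.
Proof.
  split.
  - intros H x Sx. apply H. intros b Hb. apply Hb. exact Sx.
  - intros H x Fx. apply Fx. exact H.
Qed.

Lemma exact_transport (G P : L -> Prop) :
  (forall a, G a <-> P a) -> exact_filter L P -> exact_filter L G.
Proof.
  intros E [[[a Pa] [Hup Hm]] Hex]. split; [split; [|split]|].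
  - exists a. apply E, Pa.
  - intros x y Gx Hxy. apply E. apply (Hup x); [apply E|]; assumption.
  - intros x y Gx Gy. apply E. apply Hm; apply E; assumption.
  - intros M HM HE. apply E. apply Hex; [|exact HE]. intros x Mx. apply E, HM, Mx.
Qed.

Lemma cond_exact {I : Type} (xs ys : I -> L) :
  exact_filter L (fun a => forall i, ys i <== join L a (xs i)).
Proof.
  split; [split; [|split]|].
  - exists top. intros i. eapply lt_. apply le_top. apply join_ub1.
  - intros a b Ha Hab i. eapply lt_. apply Ha.
    apply join_least. eapply lt_. exact Hab. apply join_ub1. apply join_ub2.
  - intros a b Ha Hb i. eapply lt_. apply (meet_glb L _ _ _ (Ha i) (Hb i)).
    apply split_join.
    + eapply lt_. apply meet_comm_le. apply split_join.
      * eapply lt_. apply meet_comm_le. apply join_ub1.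
      * eapply lt_. apply meet_lb2. apply join_ub2.
    + eapply lt_. apply meet_lb2. apply join_ub2.
  - intros M HM HE i. rewrite (HE (xs i)). apply inf_glb.
    intros c [m [Mm ->]]. apply HM, Mm.
Qed.

Definition ysF (F : L -> Prop) (x : L) : L :=
  inf L (fun c => exists a, F a /\ c = join L a x).

Lemma key (F : L -> Prop) : exact_filter L F ->
  forall a, nu_inv L (Sm (fun x : L => x) (ysF F)) a <-> F a.
Proof.
  intros [[_ [Hup Hm]] Hex] b.
  apply (iff_trans (char (fun x : L => x) (ysF F) _ (fun x => conj (fun h => h) (fun h => h)) b)).
  split.
  - intros H.
    set (M := fun c => exists a', F a' /\ c = join L a' b).
    assert (Eb : inf L M = b).
    { apply anti.
      - eapply lt_. apply (H b). apply join_least; apply le_refl.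
      - apply inf_glb. intros c [a' [_ ->]]. apply join_ub2. }
    rewrite <- Eb. apply Hex.
    + intros c [a' [Fa ->]]. apply (Hup a'). exact Fa. apply join_ub1.
    + intros x. rewrite Eb. apply anti.
      * apply inf_glb. intros c [m [[a' [_ ->]] ->]]. apply join_least.
        -- eapply lt_. apply (join_ub2 a' b). apply join_ub1.
        -- apply join_ub2.
      * eapply lt_; [|eapply lt_; [apply (H (join L b x))|]].
        -- apply inf_glb. intros c [a' [Fa ->]].
           eapply lt_. apply inf_lb. exists (join L a' b). split.
           exists a'. split. exact Fa. reflexivity. reflexivity.
           apply join_least. apply join_least. apply join_ub1.
           eapply lt_; [|apply join_ub2]. apply join_ub1.
           eapply lt_; [|apply join_ub2]. apply join_ub2.
        -- apply join_least. apply join_ub1. apply le_refl.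
  - intros Fb x. apply inf_lb. exists b. split. exact Fb. reflexivity.
Qed.

End Aux.

Theorem mainTheorem12 (L : frame) :
  (* nu maps Ex(L) into {fit S | S smooth} *)
  (forall F : L -> Prop, exact_filter L F ->
     exists S : L -> Prop, smooth L S /\ seteq L (nu L F) (fit L S)) /\
  (* the inverse map sends {fit S | S smooth} into Ex(L) *)
  (forall S : L -> Prop, smooth L S -> exact_filter L (nu_inv L (fit L S))) /\
  (* the two maps are mutually inverse *)
  (forall F : L -> Prop, exact_filter L F -> seteq L (nu_inv L (nu L F)) F) /\
  (forall S : L -> Prop, smooth L S ->
     seteq L (nu L (nu_inv L (fit L S))) (fit L S)) /\
  (* nu is an order isomorphism: F ⊑ G  iff  nu F ⊆ nu G *)
  (forall F G : L -> Prop, exact_filter L F -> exact_filter L G ->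
     (filter_le L F G <-> subset L (nu L F) (nu L G))).
Proof.
  assert (P1 : forall F : L -> Prop, exact_filter L F ->
     seteq L (nu L F) (fit L (Sm L (fun x : L => x) (ysF L F)))).
  { intros F HF x. split.
    - intros H a Ha. apply H. apply (key L F HF). exact Ha.
    - intros H a Fa. apply H. apply (key L F HF). exact Fa. }
  assert (P3 : forall F : L -> Prop, exact_filter L F -> seteq L (nu_inv L (nu L F)) F).
  { intros F HF a. split.
    - intros H. apply (key L F HF). apply fitinv. intros x Hx. apply H, (P1 F HF), Hx.
    - intros H. apply (key L F HF) in H. apply fitinv in H.
      intros x Hx. apply H, (P1 F HF), Hx. }
  split; [|split; [|split; [|split]]].
  - intros F HF. exists (Sm L (fun x : L => x) (ysF L F)). split.
    + exists L, (fun x : L => x), (ysF L F). intros x; split; auto.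
    + apply P1, HF.
  - intros S [I [xs [ys HS]]]. eapply exact_transport; [|apply (cond_exact L xs ys)].
    intros a. apply (iff_trans (fitinv L S a)). apply char. exact HS.
  - exact P3.
  - intros S _ x. split.
    + intros H a Ha. apply H. apply fitinv. exact Ha.
    + intros H a Ha. apply H. apply fitinv. exact Ha.
  - intros F G HF HG. split.
    + intros Hle x Hx a Ga. apply Hx, Hle, Ga.
    + intros Hs a Ga. apply (P3 F HF). intros x Hx. apply (Hs x Hx), Ga.
Qed.
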